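(* Let $(X,\Sigma)$ be an implicational base with closure operator $\phi$, let $\mathcal{B}^+$ be an antichain of $\mathcal{L}(\Sigma)$, and let $\mathcal{H}=\{X\setminus B\mid B\in\mathcal{B}^+\}$. If $T$ is a transversal of $\mathcal{H}$, then every $T^*\in\mathrm{spex}(T)$ is a transversal of $\mathcal{H}$. In particular, every minimal transversal of $\mathcal{H}$ is independent with respect to $\phi$.
   Context: An implicational base $(X,\Sigma)$ consists of a finite set $X$ and a finite set $\Sigma$ of implications $A\rightarrow b$ with $A\subseteq X$ and $b\in X$. A set $C\subseteq X$ is closed in $\Sigma$ if for every $A\rightarrow b\in\Sigma$, $A\not\subseteq C$ or $b\in C$; $\phi(C)$ denotes the smallest closed set containing $C$. $\mathcal{L}(\Sigma)$ is the lattice of closed sets ordered by inclusion; an antichain of it is a family of pairwise inclusion-incomparable closed sets. A transversal of $\mathcal{H}\subseteq 2^X$ is a set meeting every member of $\mathcal{H}$; minimal means inclusion-minimal. A set $T\subseteq X$ is independent w.r.t. $\phi$ if $x\notin\phi(T\setminus\{x\})$ for every $x\in T$. For $T,I\subseteq X$, $T$ is a generating set of $I$ if $T\subseteq I\subseteq\phi(T)$, and it is minimal if $I\not\subseteq\phi(T\setminus\{x\})$ for all $x\in T$. $\mathrm{spex}(I)$ denotes the set of all minimal generating sets of $I$. *)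

(* Defs.v *)
(* The ground set X is modelled as a finite type T (X = [set: T]). *)
From mathcomp Require Import all_boot all_order.
Set Implicit Arguments. Unset Strict Implicit. Unset Printing Implicit Defensive.

(* An implicational base: a finite list of implications A -> b, A ⊆ X, b ∈ X. *)
Definition impl_base (T : finType) := seq ({set T} * T).

Definition closedb (T : finType) (Sigma : impl_base T) (C : {set T}) : bool :=
  @all ({set T} * T) (fun ab : {set T} * T => ~~ (ab.1 \subset C) || (ab.2 \in C)) Sigma.

Definition phi (T : finType) (Sigma : impl_base T) (C : {set T}) : {set T} :=
  \bigcap_(D : {set T} | closedb Sigma D && (C \subset D)) D.

Definition closed_antichain (T : finType) (Sigma : impl_base T)
    (B : {set {set T}}) : Prop :=
  (forall C, C \in B -> closedb Sigma C) /\
  (forall C D, C \in B -> D \in B -> C \subset D -> C = D).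

Definition hg_transversal (T : finType) (H : {set {set T}}) (S : {set T}) : bool :=
  [forall E in H, S :&: E != set0].

Definition minimal_transversal (T : finType) (H : {set {set T}}) (S : {set T}) : Prop :=
  minset (hg_transversal H) S.

Definition independent (T : finType) (Sigma : impl_base T) (S : {set T}) : Prop :=
  forall x, x \in S -> x \notin phi Sigma (S :\ x).

Definition spex (T : finType) (Sigma : impl_base T) (I : {set T}) : {set {set T}} :=
  [set S : {set T} | [&& S \subset I, I \subset phi Sigma S &
      [forall x in S, ~~ (I \subset phi Sigma (S :\ x))]]].

(* Main.v *)
Require Import Defs.
From mathcomp Require Import all_boot all_order.

Lemma phi_min (T : finType) (Sigma : impl_base T) (C B : {set T}) :
  closedb Sigma B -> C \subset B -> phi Sigma C \subset B.
Proof. by move=> cB sCB; apply: bigcap_inf; rewrite cB sCB. Qed.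

Lemma tr_iff (T : finType) (S B : {set T}) :
  (S :&: ~: B != set0) = ~~ (S \subset B).
Proof. by rewrite setI_eq0 subsets_disjoint. Qed.

Theorem lemma2 (T : finType) (Sigma : impl_base T) (Bp : {set {set T}}) :
  closed_antichain Sigma Bp ->
  let H := [set ~: B | B in Bp] in
  (forall S : {set T}, hg_transversal H S ->
     forall Ss, Ss \in spex Sigma S -> hg_transversal H Ss) /\
  (forall S : {set T}, minimal_transversal H S -> independent Sigma S).
Proof.
move=> [cl _] H; split.
  move=> S /forall_inP trS Ss; rewrite inE => /and3P[sSsS sSphi _].
  apply/forall_inP => E /imsetP[B BB ->].
  rewrite tr_iff; apply/negP => sSsB.
  have := trS _ (imset_f _ BB); rewrite tr_iff => /negP; apply.
  apply: (subset_trans sSphi); apply: phi_min => //; exact: cl.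
move=> S /minsetP[trS minS] x xS; apply/negP => xphi.
have trSx : hg_transversal H (S :\ x).
  apply/forall_inP => E /imsetP[B BB ->].
  rewrite tr_iff; apply/negP => sSB.
  move/forall_inP: trS => /(_ _ (imset_f _ BB)); rewrite tr_iff => /negP; apply.
  apply/subsetP => y yS; case: (y =P x) => [->|/eqP nyx].
    have := @phi_min _ _ _ _ (cl _ BB) sSB; move/subsetP; apply; exact: xphi.
  by apply: (subsetP sSB); rewrite !inE nyx.
have := minS _ trSx (subsetDl _ _).
by move/setP/(_ x); rewrite !inE eqxx xS.
Qed.
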